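(* Let $F\in\Gamma_0^s(\mathbb{R}_+)$ and $a\in(0,1)$. Suppose that $\hat F^a$ is a metric on $[0,+\infty)$ and that $T_a(F)=F$. Then there is $c\in(0,+\infty)$ such that $F(s)=c|s^a-1|^{1/a}$ for all $s\ge0$.
   Context: $\Gamma_0(\mathbb{R}_+)$ is the set of functions $F:[0,\infty)\to[0,\infty]$ that are convex, lower semicontinuous, with $F(1)=0$. For $F\in\Gamma_0(\mathbb{R}_+)$: $\mathrm{rec}(F)(r)=\lim_{\alpha\to\infty}F(1+\alpha r)/\alpha$, $F'_\infty:=\mathrm{rec}(F)(1)$; the perspective function is $\hat F(r,t)=tF(r/t)$ for $t>0$, $\hat F(r,0)=\mathrm{rec}(F)(r)$; the reverse entropy is $R(s)=sF(1/s)$ for $s>0$, $R(0)=F'_\infty$. $\Gamma_0^s(\mathbb{R}_+)$ is the set of $F\in\Gamma_0(\mathbb{R}_+)$ with $F=R$; for such $F$, $\hat F$ is symmetric and $\hat F(1,t)=F(t)$. The marginal perspective function $H_F$ is the lower semicontinuous envelope of $\tilde H_F(r_1,r_2)=\inf_{\theta>0}[\hat F(\theta,r_1)+\hat F(\theta,r_2)]$. For $a\in(0,1]$, $T_a(F)(s)=2^{1/a-1}H_F(1,s)$. A metric on $[0,\infty)$ is a finite-valued function $D:[0,\infty)^2\to[0,\infty)$ with $D(x,y)=0\iff x=y$, symmetric, satisfying the triangle inequality. *)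

(* Defs.v *)
From Stdlib Require Import Reals Lra ClassicalEpsilon.
Open Scope R_scope.

(* Extended reals (-oo is never needed): finite values and +oo. *)
Inductive ER : Type := Fin : R -> ER | PInf : ER.

Definition er_le (x y : ER) : Prop :=
  match x, y with
  | Fin a, Fin b => a <= b
  | _, PInf => True
  | PInf, Fin _ => False
  end.

Definition er_lt (x y : ER) : Prop :=
  match x, y with
  | Fin a, Fin b => a < b
  | Fin _, PInf => True
  | PInf, _ => False
  end.

Definition er_plus (x y : ER) : ER :=
  match x, y with
  | Fin a, Fin b => Fin (a + b)
  | _, _ => PInf
  end.

(* multiplication by a real scalar t > 0 (only used with t > 0) *)
Definition er_scale (t : R) (x : ER) : ER :=
  match x with
  | Fin a => Fin (t * a)
  | PInf => PInf
  end.

Definition rpow (x p : R) : R :=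
  if Req_EM_T x 0 then 0 else Rpower x p.

Definition er_pow (x : ER) (p : R) : ER :=
  match x with
  | Fin a => Fin (rpow a p)
  | PInf => PInf
  end.

Definition er_is_lub (S : ER -> Prop) (m : ER) : Prop :=
  (forall y, S y -> er_le y m) /\
  (forall b, (forall y, S y -> er_le y b) -> er_le m b).

Definition er_is_glb (S : ER -> Prop) (m : ER) : Prop :=
  (forall y, S y -> er_le m y) /\
  (forall b, (forall y, S y -> er_le b y) -> er_le b m).

Definition er_sup (S : ER -> Prop) : ER :=
  epsilon (inhabits PInf) (er_is_lub S).

Definition er_inf (S : ER -> Prop) : ER :=
  epsilon (inhabits PInf) (er_is_glb S).

Definition er_lim_pinf (g : R -> ER) (L : ER) : Prop :=
  match L with
  | Fin l => forall eps, 0 < eps -> exists M, forall al, M < al ->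
               exists v, g al = Fin v /\ Rabs (v - l) < eps
  | PInf => forall K, exists M, forall al, M < al -> er_lt (Fin K) (g al)
  end.

Definition nonneg_on (F : R -> ER) : Prop :=
  forall x, 0 <= x -> er_le (Fin 0) (F x).

Definition convex_on_Rplus (F : R -> ER) : Prop :=
  forall x y l, 0 <= x -> 0 <= y -> 0 < l < 1 ->
    er_le (F (l * x + (1 - l) * y))
          (er_plus (er_scale l (F x)) (er_scale (1 - l) (F y))).

Definition lsc_on_Rplus (F : R -> ER) : Prop :=
  forall x c, 0 <= x -> er_lt (Fin c) (F x) ->
    exists d, 0 < d /\ forall y, 0 <= y -> Rabs (y - x) < d -> er_lt (Fin c) (F y).

Definition Gamma0 (F : R -> ER) : Prop :=
  nonneg_on F /\ convex_on_Rplus F /\ lsc_on_Rplus F /\ F 1 = Fin 0.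

Definition recF (F : R -> ER) (r : R) : ER :=
  epsilon (inhabits PInf)
    (er_lim_pinf (fun al => er_scale (/ al) (F (1 + al * r)))).

Definition Finf (F : R -> ER) : ER := recF F 1.

Definition persp (F : R -> ER) (r t : R) : ER :=
  if Rlt_dec 0 t then er_scale t (F (r / t)) else recF F r.

Definition revF (F : R -> ER) (s : R) : ER :=
  if Rlt_dec 0 s then er_scale s (F (/ s)) else Finf F.

Definition Gamma0s (F : R -> ER) : Prop :=
  Gamma0 F /\ forall s, 0 <= s -> F s = revF F s.

Definition tildeH (F : R -> ER) (r1 r2 : R) : ER :=
  er_inf (fun v => exists th, 0 < th /\ v = er_plus (persp F th r1) (persp F th r2)).

Definition lsc2_on (G : R -> R -> ER) : Prop :=
  forall x1 x2 c, 0 <= x1 -> 0 <= x2 -> er_lt (Fin c) (G x1 x2) ->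
    exists d, 0 < d /\ forall y1 y2, 0 <= y1 -> 0 <= y2 ->
      Rabs (y1 - x1) < d -> Rabs (y2 - x2) < d -> er_lt (Fin c) (G y1 y2).

Definition lsc_env (G : R -> R -> ER) (x1 x2 : R) : ER :=
  er_sup (fun v => exists g : R -> R -> ER, lsc2_on g /\
            (forall y1 y2, 0 <= y1 -> 0 <= y2 -> er_le (g y1 y2) (G y1 y2)) /\
            v = g x1 x2).

Definition HF (F : R -> ER) : R -> R -> ER := lsc_env (tildeH F).

Definition Ta (a : R) (F : R -> ER) (s : R) : ER :=
  er_scale (Rpower 2 (/ a - 1)) (HF F 1 s).

Definition is_metric_Rplus (D : R -> R -> ER) : Prop :=
  (forall x y, 0 <= x -> 0 <= y -> exists d, D x y = Fin d) /\
  (forall x y, 0 <= x -> 0 <= y -> (D x y = Fin 0 <-> x = y)) /\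
  (forall x y, 0 <= x -> 0 <= y -> D x y = D y x) /\
  (forall x y z, 0 <= x -> 0 <= y -> 0 <= z ->
     er_le (D x z) (er_plus (D x y) (D y z))).

(* Main.v *)
Require Import Defs.
From Stdlib Require Import Reals Lra Psatz ZArith ClassicalEpsilon Classical.
Open Scope R_scope.
Ltac nz := let H := fresh in intro H; lra.


Lemma rpow_0 p : rpow 0 p = 0.
Proof. unfold rpow; destruct (Req_EM_T 0 0); [reflexivity|congruence]. Qed.

Lemma rpow_nz x p : x <> 0 -> rpow x p = exp (p * ln x).
Proof. intro H; unfold rpow; destruct (Req_EM_T x 0); [congruence|reflexivity]. Qed.

Lemma rpow_ge0 x p : 0 <= rpow x p.
Proof. destruct (Req_dec x 0) as [->|H]. rewrite rpow_0; lra.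
 rewrite rpow_nz by auto. left; apply exp_pos. Qed.

Lemma rpow_gt0 x p : 0 < x -> 0 < rpow x p.
Proof. intro H; rewrite rpow_nz by nz; apply exp_pos. Qed.

Lemma rpow_1 p : rpow 1 p = 1.
Proof. rewrite rpow_nz by nz. rewrite ln_1, Rmult_0_r, exp_0; auto. Qed.

Lemma rpow_mult x y p : 0 <= x -> 0 <= y -> rpow (x*y) p = rpow x p * rpow y p.
Proof. intros Hx Hy.
 destruct (Req_dec x 0) as [->|Hx']. rewrite Rmult_0_l, rpow_0; lra.
 destruct (Req_dec y 0) as [->|Hy']. rewrite Rmult_0_r, rpow_0; lra.
 rewrite !rpow_nz by (try apply Rmult_integral_contrapositive; auto).
 rewrite ln_mult by lra. rewrite <- exp_plus. f_equal; ring. Qed.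

Lemma rpow_rpow x p q : 0 <= x -> rpow (rpow x p) q = rpow x (p*q).
Proof. intros Hx. destruct (Req_dec x 0) as [->|Hx']. rewrite !rpow_0; auto.
 rewrite (rpow_nz x p) by auto. rewrite rpow_nz by (apply Rgt_not_eq, exp_pos).
 rewrite ln_exp, rpow_nz by auto. f_equal; ring. Qed.

Lemma rpow_lt x y p : 0 < p -> 0 <= x < y -> rpow x p < rpow y p.
Proof. intros Hp [Hx Hxy]. destruct (Req_dec x 0) as [->|Hx'].
 rewrite rpow_0; apply rpow_gt0; lra.
 rewrite !rpow_nz by nz. apply exp_increasing. apply Rmult_lt_compat_l; auto.
 apply ln_increasing; lra. Qed.

Lemma rpow_le x y p : 0 < p -> 0 <= x <= y -> rpow x p <= rpow y p.
Proof. intros Hp [Hx Hxy]. destruct (Req_dec x y) as [->|H]. lra.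
 left; apply rpow_lt; lra. Qed.

Lemma rpow_inj x y p : 0 < p -> 0 <= x -> 0 <= y -> rpow x p = rpow y p -> x = y.
Proof. intros Hp Hx Hy E. destruct (Rtotal_order x y) as [H|[H|H]]; auto.
 pose proof (rpow_lt x y p Hp (conj Hx H)); lra.
 pose proof (rpow_lt y x p Hp (conj Hy H)); lra. Qed.

Lemma rpow_le_inv x y p : 0 < p -> 0 <= x -> 0 <= y -> rpow x p <= rpow y p -> x <= y.
Proof. intros Hp Hx Hy E. destruct (Rle_dec x y) as [H|H]; auto.
 apply Rnot_le_lt in H. pose proof (rpow_lt y x p Hp (conj Hy H)); lra. Qed.

Lemma ln_nonpos x : x <= 0 -> ln x = 0.
Proof. intro H. unfold ln. destruct (Rlt_dec 0 x) as [h|h]; [exfalso; lra|reflexivity]. Qed.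

Lemma rpow_neg x p : x < 0 -> rpow x p = 1.
Proof. intro H. rewrite rpow_nz by nz. rewrite ln_nonpos by lra.
 rewrite Rmult_0_r, exp_0; auto. Qed.

Lemma rpow_inv x p : 0 < x -> rpow (/x) p = / rpow x p.
Proof. intro H. rewrite !rpow_nz by (try apply Rinv_neq_0_compat; nz).
 rewrite ln_Rinv by lra. rewrite <- exp_Ropp. f_equal; ring. Qed.

Lemma rpow_id x : 0 <= x -> rpow x 1 = x.
Proof. intro H. destruct (Req_dec x 0) as [->|H']. apply rpow_0.
 rewrite rpow_nz by auto. rewrite Rmult_1_l, exp_ln; lra. Qed.

Lemma ln_lt_sub1 t : 0 < t -> t <> 1 -> ln t < t - 1.
Proof. intros H1 H2. assert (ln t <> 0). { intro E. apply H2. rewrite <- (exp_ln t) by lra. rewrite E, exp_0; auto. }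
 pose proof (exp_ineq1 (ln t) H). rewrite exp_ln in H0 by lra. lra. Qed.

Lemma ln_le_sub1 t : 0 < t -> ln t <= t - 1.
Proof. intros H. destruct (Req_dec t 1) as [->|H']. rewrite ln_1; lra.
 left; apply ln_lt_sub1; auto. Qed.

Lemma bern a z : 0 < a < 1 -> 0 <= z -> z <> 1 -> rpow z a < 1 + a*(z-1).
Proof. intros Ha Hz Hz1. destruct (Req_dec z 0) as [->|Hz0]. rewrite rpow_0; nra.
 set (M := 1 + a*(z-1)). assert (HM : 0 < M) by (unfold M; nra).
 assert (H1 : ln (z/M) <= z/M - 1) by (apply ln_le_sub1; apply Rdiv_lt_0_compat; lra).
 assert (H2 : ln (/M) < /M - 1). { apply ln_lt_sub1. apply Rinv_0_lt_compat; lra.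
   intro E. assert (M = 1). { rewrite <- (Rinv_inv M). rewrite E; field. } unfold M in H. apply Hz1. nra. }
 unfold Rdiv in H1. rewrite ln_mult in H1 by (try apply Rinv_0_lt_compat; lra).
 rewrite ln_Rinv in H1, H2 by lra.
 assert (a * (ln z - ln M) + (1-a) * (- ln M) < a*(z * /M - 1) + (1-a)*(/M - 1)).
 { apply Rplus_le_lt_compat. apply Rmult_le_compat_l; lra. apply Rmult_lt_compat_l; lra. }
 assert (a*(z * /M - 1) + (1-a)*(/M - 1) = 0). { unfold M; field. unfold M in HM; lra. }
 rewrite rpow_nz by nz. fold M. rewrite <- (exp_ln M) by lra. apply exp_increasing. lra. Qed.

Lemma bern_le a z : 0 < a < 1 -> 0 <= z -> rpow z a <= 1 + a*(z-1).
Proof. intros Ha Hz. destruct (Req_dec z 1) as [->|H]. rewrite rpow_1; lra. left; apply bern; auto. Qed.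

Lemma conc a X Y : 0 < a < 1 -> 0 <= X -> 0 <= Y ->
  rpow X a + rpow Y a <= 2 * rpow ((X+Y)/2) a /\
  (X <> Y -> rpow X a + rpow Y a < 2 * rpow ((X+Y)/2) a).
Proof. intros Ha HX HY. set (m := (X+Y)/2).
 destruct (Req_dec m 0) as [Hm|Hm].
 { assert (X = 0) by (unfold m in Hm; lra). assert (Y = 0) by (unfold m in Hm; lra). subst. rewrite Hm, !rpow_0. split; lra. }
 assert (Hm' : 0 < m) by (unfold m in *; lra).
 assert (EX : X = m * (X/m)) by (field; lra). assert (EY : Y = m * (Y/m)) by (field; lra).
 assert (HXm : 0 <= X/m) by (apply Rmult_le_pos; [lra| left; apply Rinv_0_lt_compat; lra]).
 assert (HYm : 0 <= Y/m) by (apply Rmult_le_pos; [lra| left; apply Rinv_0_lt_compat; lra]).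
 assert (RX : rpow X a = rpow m a * rpow (X/m) a) by (rewrite EX at 1; apply rpow_mult; lra).
 assert (RY : rpow Y a = rpow m a * rpow (Y/m) a) by (rewrite EY at 1; apply rpow_mult; lra).
 assert (Hs : X/m + Y/m = 2) by (unfold m; field; unfold m in Hm; lra).
 pose proof (rpow_gt0 m a Hm').
 pose proof (bern_le a (X/m) Ha HXm). pose proof (bern_le a (Y/m) Ha HYm).
 rewrite RX, RY. split.
 - assert (rpow (X/m) a + rpow (Y/m) a <= 2) by nra. nra.
 - intro HXY. assert (X/m <> 1). { intro E. apply HXY. assert (X = m) by (rewrite EX, E; ring). unfold m in H2; lra. }
   pose proof (bern a (X/m) Ha HXm H2).
   assert (rpow (X/m) a + rpow (Y/m) a < 2) by nra. nra. Qed.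


Definition Pf (f : R -> R) x y := y * f (x / y).
Definition rd f a x y := rpow (Pf f x y) a.

Record RH (f : R -> R) (a : R) : Prop := {
 rh_a : 0 < a < 1;
 rh_nn : forall x, 0 <= x -> 0 <= f x;
 rh_f1 : f 1 = 0;
 rh_f0 : 0 < f 0;
 rh_sym : forall s, 0 < s -> f s = s * f (/ s);
 rh_mono : forall x y, 0 <= x -> x <= y -> y <= 1 -> f y <= f x;
 rh_T : forall x y z, 0<x -> 0<y -> 0<z -> rd f a x z <= rd f a x y + rd f a y z;
 rh_T0a : forall x y, 0<x -> 0<y -> rd f a x y <= rpow (x * f 0) a + rpow (y * f 0) a;
 rh_T0b : forall x y, 0<x -> 0<y -> rpow (y * f 0) a <= rpow (x * f 0) a + rd f a x y;
 rh_MP : forall s, 1 < s -> exists th, 1 <= th <= s /\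
     Pf f th 1 + Pf f th s <= f s / Rpower 2 (/a - 1) }.

Section RL.
Variables (f : R -> R) (a : R) (H : RH f a).

Lemma Pf_sym x y : 0 < x -> 0 < y -> Pf f x y = Pf f y x.
Proof. intros Hx Hy. unfold Pf. rewrite (rh_sym f a H (x/y)) by (apply Rdiv_lt_0_compat; lra).
 replace (/ (x/y)) with (y/x) by (field; split; nz). field; nz. Qed.

Lemma Pf_nn x y : 0 <= x -> 0 < y -> 0 <= Pf f x y.
Proof. intros. unfold Pf. apply Rmult_le_pos; [lra|]. apply (rh_nn f a H).
 apply Rmult_le_pos; [lra|left; apply Rinv_0_lt_compat; lra]. Qed.

Lemma Pf_x1 x : Pf f x 1 = f x.
Proof. unfold Pf. replace (x/1) with x by field. ring. Qed.

Lemma Pf_hom l x y : 0 < l -> 0 < y -> Pf f (l*x) (l*y) = l * Pf f x y.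
Proof. intros. unfold Pf. replace (l*x/(l*y)) with (x/y) by (field; split; nz). ring. Qed.

Lemma rd_hom l x y : 0 < l -> 0 <= x -> 0 < y -> rd f a (l*x) (l*y) = rpow l a * rd f a x y.
Proof. intros. unfold rd. rewrite Pf_hom by auto. apply rpow_mult; [lra|apply Pf_nn; auto]. Qed.

Lemma rd_sym x y : 0 < x -> 0 < y -> rd f a x y = rd f a y x.
Proof. intros. unfold rd. rewrite Pf_sym; auto. Qed.

Lemma rd_self x : 0 < x -> rd f a x x = 0.
Proof. intros. unfold rd, Pf. replace (x/x) with 1 by (field; nz). rewrite (rh_f1 f a H), Rmult_0_r. apply rpow_0. Qed.

Lemma rd_x1 x : rd f a x 1 = rpow (f x) a.
Proof. unfold rd. rewrite Pf_x1. auto. Qed.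

Lemma two_pow : Rpower 2 (/a - 1) * 2 = Rpower 2 (/a).
Proof. rewrite <- (Rpower_1 2) at 2 by lra. rewrite <- Rpower_plus. f_equal; ring. Qed.

Lemma rpow_two_pow : rpow (Rpower 2 (/a)) a = 2.
Proof. pose proof (rh_a f a H). assert (0 < Rpower 2 (/a)) by (unfold Rpower; apply exp_pos).
 rewrite rpow_nz by nz. change (exp (a * ln (Rpower 2 (/a)))) with (Rpower (Rpower 2 (/a)) a).
 rewrite Rpower_mult. replace (/a * a) with 1 by (field; nz). apply Rpower_1; lra. Qed.

Lemma key X Y Z : 0 <= X -> 0 <= Y -> 0 <= Z ->
  rpow Z a <= rpow X a + rpow Y a -> X + Y <= Z / Rpower 2 (/a - 1) ->
  rpow X a = rpow Z a / 2 /\ rpow Y a = rpow Z a / 2.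
Proof. intros HX HY HZ H1 H2. pose proof (rh_a f a H) as Ha.
 destruct (conc a X Y Ha HX HY) as [C1 C2].
 assert (HP : 0 < Rpower 2 (/a - 1)) by (unfold Rpower; apply exp_pos).
 assert (Hm : (X+Y)/2 <= Z * / Rpower 2 (/a)).
 { rewrite <- two_pow. unfold Rdiv in *. rewrite Rinv_mult. 
   apply Rmult_le_reg_r with 2; [lra|]. replace (Z * (/ Rpower 2 (/ a - 1) * / 2) * 2) with (Z * / Rpower 2 (/ a - 1)) by (field; nz). lra. }
 assert (HPp : 0 < Rpower 2 (/a)) by (unfold Rpower; apply exp_pos).
 assert (R3 : rpow ((X+Y)/2) a <= rpow Z a / 2).
 { eapply Rle_trans. apply rpow_le. lra. split; [lra| exact Hm].
   rewrite rpow_mult by (try lra; left; apply Rinv_0_lt_compat; lra).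
   rewrite rpow_inv by lra. rewrite rpow_two_pow. unfold Rdiv; lra. }
 destruct (Req_dec X Y) as [<-|HXY].
 - split; lra.
 - specialize (C2 HXY). lra. Qed.

Lemma midpoint u v : 0 < u -> u <= v -> exists m, u <= m <= v /\
  rd f a u m = rd f a u v / 2 /\ rd f a m v = rd f a u v / 2.
Proof. intros Hu Huv. destruct (Req_dec u v) as [<-|Hne].
 { exists u. rewrite rd_self by auto. split; [lra|split; lra]. }
 set (s := v / u). assert (Hs : 1 < s).
 { unfold s. apply Rmult_lt_reg_r with u; auto. unfold Rdiv. rewrite Rmult_assoc, Rinv_l by nz. lra. }
 destruct (rh_MP f a H s Hs) as [th [Hth Hle]].
 assert (Hv : v = u * s) by (unfold s; field; nz).
 pose proof (rh_T f a H 1 th s ltac:(lra) ltac:(lra) ltac:(lra)) as T.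
 assert (E1 : rd f a 1 s = rpow (f s) a) by (rewrite rd_sym by lra; apply rd_x1).
 assert (E2 : rd f a 1 th = rpow (Pf f th 1) a) by (rewrite rd_sym by lra; reflexivity).
 rewrite E1, E2 in T. unfold rd in T.
 destruct (key (Pf f th 1) (Pf f th s) (f s)) as [K1 K2].
 apply Pf_nn; lra. apply Pf_nn; lra. apply (rh_nn f a H); lra. exact T. exact Hle.
 exists (u * th). split. split. nra. rewrite Hv. nra.
 assert (A1 : rd f a u (u*th) = rpow u a * rd f a 1 th) by (replace u with (u*1) at 1 by ring; rewrite rd_hom by lra; f_equal; f_equal; ring).
 assert (A2 : rd f a u v = rpow u a * rd f a 1 s) by (rewrite Hv; replace u with (u*1) at 1 by ring; rewrite rd_hom by lra; f_equal; f_equal; ring).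
 assert (A3 : rd f a (u*th) v = rpow u a * rd f a th s) by (rewrite Hv; apply rd_hom; lra).
 rewrite A1, A2, A3, E1, E2, K1. unfold rd; rewrite K2. split; field. Qed.

Definition Qc x t w := exists q1 q2, x <= q1 /\ q1 <= q2 /\ q2 <= 1 /\
  rd f a x q1 = t * rd f a x 1 /\ rd f a q1 q2 = w * rd f a x 1 /\
  rd f a q2 1 = (1 - t - w) * rd f a x 1.

Lemma Qc_step x t w : 0 < x -> Qc x t w -> Qc x t (w/2) /\ Qc x (t + w/2) (w/2).
Proof. intros Hx [q1 [q2 [H1 [H2 [H3 [E1 [E2 E3]]]]]]].
 destruct (midpoint q1 q2) as [m [Hm [M1 M2]]]; try lra.
 set (D := rd f a x 1) in *.
 assert (T1 : D <= rd f a x q1 + rd f a q1 m + rd f a m 1).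
 { pose proof (rh_T f a H x q1 1 ltac:(lra) ltac:(lra) ltac:(lra)).
   pose proof (rh_T f a H q1 m 1 ltac:(lra) ltac:(lra) ltac:(lra)). unfold D; lra. }
 assert (T2 : rd f a m 1 <= rd f a m q2 + rd f a q2 1) by (apply (rh_T f a H); lra).
 assert (T3 : D <= rd f a x m + rd f a m q2 + rd f a q2 1).
 { pose proof (rh_T f a H x m 1 ltac:(lra) ltac:(lra) ltac:(lra)). unfold D; lra. }
 assert (T4 : rd f a x m <= rd f a x q1 + rd f a q1 m) by (apply (rh_T f a H); lra).
 split.
 - exists q1, m. split; [lra|]. split; [lra|]. split; [lra|]. split; [exact E1|]. split.
   rewrite M1, E2; unfold D; field.
   apply Rle_antisym; [rewrite M2, E2 in T2; unfold D in *; lra | rewrite M1, E2 in T1; unfold D in *; lra].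
 - exists m, q2. split; [lra|]. split; [lra|]. split; [lra|]. split.
   apply Rle_antisym; [rewrite M1, E2 in T4; unfold D in *; lra | rewrite M2, E2 in T3; unfold D in *; lra].
   split. rewrite M2, E2; unfold D; field. rewrite E3; unfold D; field. Qed.

Lemma Qc_all x : 0 < x -> x <= 1 -> forall n (k : nat), INR k < 2 ^ n -> Qc x (INR k / 2 ^ n) (/ 2 ^ n).
Proof. intros Hx Hx1 n. induction n as [|n IH]; intros k Hk.
 - simpl in Hk. assert (k = 0%nat). { destruct k; auto. rewrite S_INR in Hk. pose proof (pos_INR k); lra. }
   subst. simpl. exists x, 1. repeat split; try lra.
   rewrite rd_self by lra; field. rewrite rd_self by lra; field.
 - destruct (Nat.Even_or_Odd k) as [[j ->]|[j ->]].
   + assert (INR j < 2^n). { rewrite mult_INR in Hk. simpl in Hk. simpl INR in Hk. lra. }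
     destruct (Qc_step x _ _ Hx (IH j H0)) as [Q _].
     replace (INR (2*j) / 2 ^ S n) with (INR j / 2^n). replace (/ 2 ^ S n) with (/2^n/2). auto.
     simpl. field. apply pow_nonzero; nz.
     rewrite mult_INR. simpl. field. apply pow_nonzero; nz.
   + assert (INR j < 2^n). { rewrite plus_INR, mult_INR in Hk. simpl in Hk. simpl INR in Hk. lra. }
     destruct (Qc_step x _ _ Hx (IH j H0)) as [_ Q].
     replace (INR (2*j+1) / 2 ^ S n) with (INR j / 2^n + /2^n/2). replace (/ 2 ^ S n) with (/2^n/2). auto.
     simpl. field. apply pow_nonzero; nz.
     rewrite plus_INR, mult_INR. simpl. field. apply pow_nonzero; nz. Qed.
End RL.


Lemma INR_lt_pow2 n : INR n < 2 ^ n.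
Proof. induction n. simpl; lra. rewrite S_INR. simpl. pose proof (pow_R1_Rle 2 n ltac:(lra)). lra. Qed.

Lemma pow2_small eta : 0 < eta -> exists n, / 2 ^ n < eta.
Proof. intros He. destruct (archimed_cor1 eta He) as [N [HN HN0]].
 exists N. apply lt_0_INR in HN0. pose proof (INR_lt_pow2 N).
 eapply Rle_lt_trans; [|exact HN]. apply Rinv_le_contravar; lra. Qed.

Lemma floor_nat T : 0 <= T -> exists k : nat, INR k <= T < INR k + 1.
Proof. intros HT. destruct (base_Int_part T) as [H1 H2].
 assert (Hz : (0 <= Int_part T)%Z). { assert (-1 < IZR (Int_part T)) by lra.
   apply lt_IZR in H. lia. }
 exists (Z.to_nat (Int_part T)). rewrite INR_IZR_INZ, Z2Nat.id by auto. lra. Qed.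

Section RL2.
Variables (f : R -> R) (a : R) (H : RH f a).

Lemma rd_s1 s : 0 < s < 1 -> rd f a s 1 = rpow (f 0) a * (1 - rpow s a).
Proof. intros Hs. pose proof (rh_a f a H) as Ha. pose proof (rh_f0 f a H) as Hf0.
 set (c := rpow (f 0) a). assert (Hc : 0 < c) by (apply rpow_gt0; lra).
 assert (HAs : 0 < rpow s a) by (apply rpow_gt0; lra).
 assert (HAs1 : rpow s a < 1) by (rewrite <- (rpow_1 a); apply rpow_lt; lra).
 assert (L : c <= rpow s a * c + rd f a s 1).
 { pose proof (rh_T0b f a H s 1 ltac:(lra) ltac:(lra)).
   rewrite !rpow_mult in H0 by lra. rewrite rpow_1 in H0. unfold c; lra. }
 apply Rle_antisym; [|nra].
 apply Rnot_lt_le. intro Hgt.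
 set (eps := rd f a s 1 - c * (1 - rpow s a)). assert (He : 0 < eps) by (unfold eps; lra).
 set (eta := Rmin (eps / (8*c)) (Rmin (rpow s a / 4) (1/2))).
 assert (Heta0 : 0 < eta). { unfold eta. repeat apply Rmin_pos; try lra. apply Rdiv_lt_0_compat; lra. }
 assert (Heta1 : eta <= eps/(8*c)) by apply Rmin_l.
 assert (Heta2 : eta <= rpow s a / 4) by (unfold eta; eapply Rle_trans; [apply Rmin_r|apply Rmin_l]).
 assert (Heta3 : eta <= 1/2) by (unfold eta; eapply Rle_trans; [apply Rmin_r|apply Rmin_r]).
 set (x := rpow eta (/a)).
 assert (Hx0 : 0 < x) by (apply rpow_gt0; lra).
 assert (Hx1 : x < 1) by (unfold x; rewrite <- (rpow_1 (/a)); apply rpow_lt; [apply Rinv_0_lt_compat|]; lra).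
 assert (HAx : rpow x a = eta). { unfold x. rewrite rpow_rpow by lra. replace (/a*a) with 1 by (field; nz). apply rpow_id; lra. }
 destruct (pow2_small eta Heta0) as [n Hn].
 assert (Hp : 0 < 2^n) by (apply pow_lt; lra).
 set (T := rpow s a - 2*eta).
 destruct (floor_nat (T * 2^n)) as [k [Hk1 Hk2]]. unfold T; nra.
 assert (Hk : INR k < 2^n) by (unfold T in *; nra).
 destruct (Qc_all f a H x Hx0 ltac:(lra) n k Hk) as [q1 [q2 [Q1 [Q2 [Q3 [E1 [E2 E3]]]]]]].
 set (t := INR k / 2^n) in *. set (w := /2^n) in *. set (D := rd f a x 1) in *.
 assert (Ht0 : 0 <= t) by (unfold t; apply Rmult_le_pos; [apply pos_INR|left; apply Rinv_0_lt_compat; lra]).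
 assert (HtT : t <= T). { unfold t. apply Rmult_le_reg_r with (2^n); auto. unfold Rdiv. rewrite Rmult_assoc, Rinv_l by nz. lra. }
 assert (HtT2 : T - w < t). { unfold t, w. apply Rmult_lt_reg_r with (2^n); auto. unfold Rdiv. rewrite Rmult_minus_distr_r, !Rmult_assoc, Rinv_l by nz. lra. }
 assert (HD : D <= eta * c + c).
 { pose proof (rh_T0a f a H x 1 ltac:(lra) ltac:(lra)). rewrite !rpow_mult in H0 by lra. rewrite rpow_1, HAx in H0. unfold D, c; lra. }
 assert (HD0 : 0 <= D) by (unfold D, rd; apply rpow_ge0).
 assert (Hq1 : rd f a q1 1 <= (1 - t) * D).
 { pose proof (rh_T f a H q1 q2 1 ltac:(lra) ltac:(lra) ltac:(lra)). unfold D in *. rewrite E2, E3 in H0. lra. }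
 assert (HAq : rpow q1 a * c <= eta * c + t * D).
 { pose proof (rh_T0b f a H x q1 ltac:(lra) ltac:(lra)). rewrite !rpow_mult in H0 by lra. rewrite HAx in H0. unfold D in *. rewrite E1 in H0. unfold c; lra. }
 assert (HAq2 : rpow q1 a <= rpow s a).
 { assert (t*D <= t*(eta*c+c)) by (apply Rmult_le_compat_l; lra).
   assert (Ht1 : t <= 1) by (unfold T in HtT; lra).
   assert (t*(eta*c) <= 1*(eta*c)) by (apply Rmult_le_compat_r; nra).
   assert (rpow q1 a * c <= (t + 2*eta) * c) by nra.
   assert (rpow q1 a <= t + 2*eta) by (apply Rmult_le_reg_r with c; lra). unfold T in HtT. lra. }
 assert (Hq1s : q1 <= s) by (apply (rpow_le_inv q1 s a); lra).
 assert (Hm : rd f a s 1 <= rd f a q1 1).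
 { rewrite !rd_x1. apply rpow_le; [lra|]. split. apply (rh_nn f a H); lra. apply (rh_mono f a H); lra. }
 assert (Hw : w < eta) by exact Hn.
 assert (B : rd f a s 1 <= (1 - t) * (eta * c + c)).
 { assert ((1-t)*D <= (1-t)*(eta*c+c)) by (apply Rmult_le_compat_l; unfold T in HtT; lra). lra. }
 assert (B2 : 1 - t <= 1 - rpow s a + 3*eta) by (unfold T in HtT2; lra).
 assert ((1-t)*(eta*c+c) <= (1 - rpow s a + 3*eta)*(eta*c+c)) by (apply Rmult_le_compat_r; nra).
 assert (eps <= 7 * eta * c) by (unfold eps in *; nra).
 assert (eta * (8 * c) <= eps). { apply Rmult_le_reg_r with (/(8*c)). apply Rinv_0_lt_compat; lra.
   rewrite Rmult_assoc, Rinv_r by nz. unfold Rdiv in Heta1. lra. }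
 nra. Qed.

Lemma f_formula s : 0 <= s -> f s = f 0 * rpow (Rabs (rpow s a - 1)) (/ a).
Proof. intros Hs. pose proof (rh_a f a H) as Ha. pose proof (rh_f0 f a H) as Hf0.
 assert (Hpa : /a * a = 1) by (field; nz). assert (Hap : a * /a = 1) by (field; nz).
 assert (Hinv : forall y, 0 <= y -> rpow (rpow y a) (/a) = y).
 { intros y Hy. rewrite rpow_rpow by auto. rewrite Hap. apply rpow_id; auto. }
 assert (Mid : forall s, 0 < s < 1 -> f s = f 0 * rpow (Rabs (rpow s a - 1)) (/ a)).
 { intros u Hu. pose proof (rd_s1 u Hu) as E. rewrite rd_x1 in E.
   assert (HAu1 : rpow u a < 1) by (rewrite <- (rpow_1 a); apply rpow_lt; lra).
   rewrite <- (Hinv (f u)) by (apply (rh_nn f a H); lra). rewrite E.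
   rewrite rpow_mult by (try apply rpow_ge0; lra). rewrite Hinv by lra.
   f_equal. f_equal. rewrite Rabs_left by lra. ring. }
 destruct (Rtotal_order s 1) as [Hs1|[->|Hs1]].
 - destruct (Req_dec s 0) as [->|Hs0].
   + rewrite rpow_0. replace (Rabs (0-1)) with 1 by (rewrite Rabs_left by lra; ring). rewrite rpow_1; ring.
   + apply Mid; lra.
 - rewrite rpow_1, (rh_f1 f a H). replace (1-1) with 0 by ring. rewrite Rabs_R0, rpow_0; ring.
 - rewrite (rh_sym f a H s) by lra.
   assert (Hi : 0 < /s < 1). { split. apply Rinv_0_lt_compat; lra. rewrite <- Rinv_1. apply Rinv_lt_contravar; lra. }
   rewrite Mid by auto. rewrite rpow_inv by lra.
   assert (HAs : 1 < rpow s a) by (rewrite <- (rpow_1 a); apply rpow_lt; lra).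
   replace (/ rpow s a - 1) with (- ((rpow s a - 1) * / rpow s a)) by (field; nz).
   rewrite Rabs_Ropp. rewrite Rabs_right by (apply Rle_ge, Rmult_le_pos; [lra| left; apply Rinv_0_lt_compat; lra]).
   rewrite Rabs_right by lra.
   rewrite rpow_mult by (try lra; left; apply Rinv_0_lt_compat; lra).
   rewrite rpow_inv by lra. rewrite Hinv by lra. field. nz. Qed.
End RL2.


Lemma er_sup_spec S : (exists v, S v) -> er_is_lub S (er_sup S).
Proof. intros [v0 Hv0]. unfold er_sup. apply epsilon_spec.
 destruct (classic (S PInf)) as [HP|HP].
 { exists PInf. split. intros y _. destruct y; simpl; auto.
   intros b Hb. specialize (Hb PInf HP). destruct b; simpl in *; auto. }
 set (E := fun r => S (Fin r)).
 assert (HE : exists r, E r). { destruct v0 as [r|]. exists r; auto. contradiction. }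
 destruct (classic (bound E)) as [Hb|Hb].
 - destruct (completeness E Hb HE) as [m [Hm1 Hm2]]. exists (Fin m). split.
   + intros y Hy. destruct y as [r|]; [|contradiction]. simpl. apply Hm1. exact Hy.
   + intros b Hb'. destruct b as [B|]; simpl; auto. apply Hm2. intros r Hr. exact (Hb' (Fin r) Hr).
 - exists PInf. split. intros y _; destruct y; simpl; auto.
   intros b Hb'. destruct b as [B|]; simpl; auto. exfalso. apply Hb. exists B. intros r Hr. exact (Hb' (Fin r) Hr).
Qed.

Lemma er_inf_spec S L : (exists v, S v) -> (forall v, S v -> er_le (Fin L) v) -> er_is_glb S (er_inf S).
Proof. intros [v0 Hv0] HL. unfold er_inf. apply epsilon_spec.
 destruct (classic (exists r, S (Fin r))) as [[r0 Hr0]|HN].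
 - set (E := fun r => S (Fin (- r))).
   assert (Hb : bound E). { exists (-L). intros r Hr. specialize (HL _ Hr). simpl in HL. lra. }
   assert (HE : exists r, E r). { exists (-r0). unfold E. rewrite Ropp_involutive. auto. }
   destruct (completeness E Hb HE) as [m [Hm1 Hm2]]. exists (Fin (-m)). split.
   + intros y Hy. destruct y as [r|]; simpl; auto.
     assert (E (-r)) by (unfold E; rewrite Ropp_involutive; auto). specialize (Hm1 _ H). lra.
   + intros b Hb'. destruct b as [B|]; simpl.
     * assert (m <= -B). { apply Hm2. intros r Hr. specialize (Hb' _ Hr). simpl in Hb'. lra. } lra.
     * specialize (Hb' _ Hr0). simpl in Hb'. auto.
 - exists PInf. split.
   + intros y Hy. destruct y as [r|]; simpl; auto. apply HN. exists r; auto.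
   + intros b _. destruct b; simpl; auto.
Qed.

Lemma Pf_lsc (f : R -> R) :
  (forall x, 0 <= x -> 0 <= f x) ->
  (forall x c, 0 <= x -> c < f x -> exists d, 0 < d /\ forall y, 0 <= y -> Rabs (y - x) < d -> c < f y) ->
  forall th0 y0 eps, 0 < th0 -> 0 < y0 -> 0 < eps -> exists rho, 0 < rho /\
  forall th y, 0 < th -> 0 < y -> Rabs (th - th0) < rho -> Rabs (y - y0) < rho ->
   Pf f th0 y0 - eps < Pf f th y.
Proof. intros Hnn Hlsc th0 y0 eps Hth0 Hy0 He.
 set (z0 := th0 / y0). assert (Hz0 : 0 < z0) by (apply Rdiv_lt_0_compat; lra).
 assert (Hf0 : 0 <= f z0) by (apply Hnn; lra).
 set (e1 := eps / (2*(y0+1))). assert (He1 : 0 < e1) by (apply Rdiv_lt_0_compat; lra).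
 destruct (Hlsc z0 (f z0 - e1) ltac:(lra) ltac:(lra)) as [d1 [Hd1 Hd1']].
 set (rho := Rmin (Rmin 1 (y0/2)) (Rmin (eps / (2*(f z0 + 1))) (d1 * (y0*y0) / (2*(y0+th0+1))))).
 assert (R1 : rho <= 1) by (unfold rho; eapply Rle_trans; apply Rmin_l).
 assert (R2 : rho <= y0/2) by (unfold rho; eapply Rle_trans; [apply Rmin_l|apply Rmin_r]).
 assert (R3 : rho <= eps / (2*(f z0 + 1))) by (unfold rho; eapply Rle_trans; [apply Rmin_r|apply Rmin_l]).
 assert (R4 : rho <= d1 * (y0*y0) / (2*(y0+th0+1))) by (unfold rho; eapply Rle_trans; [apply Rmin_r|apply Rmin_r]).
 assert (Hrho : 0 < rho). { unfold rho. apply Rmin_pos; apply Rmin_pos; try lra.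
   apply Rdiv_lt_0_compat; lra. apply Rdiv_lt_0_compat. apply Rmult_lt_0_compat; nra. lra. }
 exists rho. split; auto. intros th y Hth Hy A1 A2.
 apply Rabs_def2 in A1. apply Rabs_def2 in A2.
 assert (Hz : Rabs (th / y - z0) < d1).
 { unfold z0. replace (th / y - th0 / y0) with (((th - th0) * y0 + th0 * (y0 - y)) * / (y * y0)) by (field; split; nz).
   assert (HD : 0 < y * y0) by nra.
   rewrite Rabs_mult, Rabs_inv, (Rabs_pos_eq (y*y0)) by lra.
   apply Rmult_lt_reg_r with (y*y0); auto. rewrite Rmult_assoc, Rinv_l by nz. rewrite Rmult_1_r.
   assert (Rabs ((th - th0) * y0 + th0 * (y0 - y)) <= rho * (y0 + th0)).
   { eapply Rle_trans. apply Rabs_triang. rewrite !Rabs_mult, (Rabs_pos_eq y0), (Rabs_pos_eq th0) by lra.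
     assert (Rabs (th - th0) <= rho) by (apply Rabs_le; lra).
     assert (Rabs (y0 - y) <= rho) by (apply Rabs_le; lra). nra. }
   assert (rho * (2*(y0+th0+1)) <= d1 * (y0*y0)).
   { apply Rmult_le_reg_r with (/ (2*(y0+th0+1))). apply Rinv_0_lt_compat; lra.
     rewrite Rmult_assoc, Rinv_r by nz. unfold Rdiv in R4. lra. }
   assert (y0 * y0 <= 2 * (y * y0)) by nra. nra. }
 specialize (Hd1' (th / y) ltac:(left; apply Rdiv_lt_0_compat; lra) Hz).
 unfold Pf. fold z0.
 assert (rho * (2*(f z0 + 1)) <= eps).
 { apply Rmult_le_reg_r with (/ (2*(f z0+1))). apply Rinv_0_lt_compat; lra.
   rewrite Rmult_assoc, Rinv_r by nz. unfold Rdiv in R3. lra. }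
 assert (e1 * (2*(y0+1)) = eps) by (unfold e1; field; nz).
 assert (y * (f (th/y) - f z0) >= - y * e1) by nra.
 assert ((y - y0) * f z0 >= - rho * f z0) by nra.
 nra. Qed.

From Coquelicot Require Import Coquelicot.

Lemma div_le_1 x y : 0 < y -> x <= y -> x / y <= 1.
Proof. intros. apply Rmult_le_reg_r with y; auto. unfold Rdiv. rewrite Rmult_assoc, Rinv_l by nz. lra. Qed.
Lemma one_le_div x y : 0 < y -> y <= x -> 1 <= x / y.
Proof. intros. apply Rmult_le_reg_r with y; auto. unfold Rdiv. rewrite Rmult_assoc, Rinv_l by nz. lra. Qed.
Lemma div_le_div x x' y : 0 < y -> x <= x' -> x / y <= x' / y.
Proof. intros. unfold Rdiv. apply Rmult_le_compat_r; auto. left; apply Rinv_0_lt_compat; auto. Qed.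

Lemma er_plus_lb L u v : er_le (Fin L) u -> er_le (Fin L) v -> er_le (Fin (2*L)) (er_plus u v).
Proof. destruct u, v; simpl; auto. lra. Qed.

Lemma MP_ER (F : R -> ER) (f : R -> R) (s h L : R) :
 (forall x, 0 <= x -> F x = Fin (f x)) ->
 (forall x, 0 <= x -> 0 <= f x) ->
 (forall x c, 0 <= x -> c < f x -> exists d, 0 < d /\ forall y, 0 <= y -> Rabs (y - x) < d -> c < f y) ->
 (forall x y, 0 <= x -> x <= y -> y <= 1 -> f y <= f x) ->
 (forall x y, 1 <= x -> x <= y -> f x <= f y) ->
 L <= 0 ->
 (forall th r, 0 < th -> 0 <= r -> er_le (Fin L) (persp F th r)) ->
 0 <= h -> HF F 1 s = Fin h -> 1 < s ->
 exists th, 1 <= th <= s /\ Pf f th 1 + Pf f th s <= h.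
Proof. intros HFin Hnn Hlsc Hm0 Hm1 HL Hlow Hh HHF Hs.
 apply NNPP; intro Hno.
 set (Phi := fun th y1 y2 => Pf f th y1 + Pf f th y2).
 assert (PfL : forall th th' y, 0 < th -> th <= th' -> th' <= y -> Pf f th' y <= Pf f th y).
 { intros th th' y H1 H2 H3. unfold Pf. apply Rmult_le_compat_l; [lra|]. apply Hm0.
   left; apply Rdiv_lt_0_compat; lra. apply div_le_div; lra. apply div_le_1; lra. }
 assert (PfR : forall th th' y, 0 < y -> y <= th' -> th' <= th -> Pf f th' y <= Pf f th y).
 { intros th th' y H1 H2 H3. unfold Pf. apply Rmult_le_compat_l; [lra|]. apply Hm1.
   apply one_le_div; lra. apply div_le_div; lra. }
 assert (Hno' : forall th, 1 <= th <= s -> h < Phi th 1 s).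
 { intros th Hth. apply Rnot_le_lt. intro. apply Hno. exists th. auto. }
 assert (HK : forall th, 1/2 <= th <= s+1 -> h < Phi th 1 s).
 { intros th Hth. destruct (Rlt_dec th 1) as [H1|H1].
   - specialize (Hno' 1 ltac:(lra)). unfold Phi in *; cbv beta in *.
     pose proof (PfL th 1 1 ltac:(lra) ltac:(lra) ltac:(lra)). pose proof (PfL th 1 s ltac:(lra) ltac:(lra) ltac:(lra)). lra.
   - destruct (Rlt_dec s th) as [H2|H2].
     + specialize (Hno' s ltac:(lra)). unfold Phi in *; cbv beta in *.
       pose proof (PfR th s 1 ltac:(lra) ltac:(lra) ltac:(lra)). pose proof (PfR th s s ltac:(lra) ltac:(lra) ltac:(lra)). lra.
     + apply Hno'; lra. }
 set (Prop_r := fun th r => 0 < r /\ r <= 1/4 /\ (1/2 <= th <= s+1 -> forall th' y1 y2, 0 < th' -> 0 < y1 -> 0 < y2 ->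
    Rabs (th' - th) < r -> Rabs (y1 - 1) < r -> Rabs (y2 - s) < r -> h + r < Phi th' y1 y2)).
 assert (Ex : forall th, exists r, Prop_r th r).
 { intro th. destruct (classic (1/2 <= th <= s+1)) as [Hin|Hout].
   - set (e := (Phi th 1 s - h)/2). assert (He : 0 < e) by (specialize (HK th Hin); unfold e; lra).
     destruct (Pf_lsc f Hnn Hlsc th 1 (e/2) ltac:(lra) ltac:(lra) ltac:(lra)) as [r1 [Hr1 P1]].
     destruct (Pf_lsc f Hnn Hlsc th s (e/2) ltac:(lra) ltac:(lra) ltac:(lra)) as [r2 [Hr2 P2]].
     exists (Rmin (Rmin r1 r2) (Rmin e (1/4))).
     assert (M1 : Rmin (Rmin r1 r2) (Rmin e (1/4)) <= r1) by (eapply Rle_trans; apply Rmin_l).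
     assert (M2 : Rmin (Rmin r1 r2) (Rmin e (1/4)) <= r2) by (eapply Rle_trans; [apply Rmin_l|apply Rmin_r]).
     assert (M3 : Rmin (Rmin r1 r2) (Rmin e (1/4)) <= e) by (eapply Rle_trans; [apply Rmin_r|apply Rmin_l]).
     assert (M4 : Rmin (Rmin r1 r2) (Rmin e (1/4)) <= 1/4) by (eapply Rle_trans; [apply Rmin_r|apply Rmin_r]).
     split. apply Rmin_pos; apply Rmin_pos; lra. split; auto.
     intros _ th' y1 y2 Hth' Hy1 Hy2 A1 A2 A3.
     specialize (P1 th' y1 Hth' Hy1 ltac:(lra) ltac:(lra)).
     specialize (P2 th' y2 Hth' Hy2 ltac:(lra) ltac:(lra)).
     unfold e, Phi in *; cbv beta in *. lra.
   - exists (1/4). split; [lra|split;[lra|]]. intro; contradiction. }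
 set (dv := fun th => epsilon (inhabits 1) (Prop_r th)).
 assert (dv_spec : forall th, Prop_r th (dv th)) by (intro th; apply epsilon_spec; apply Ex).
 set (delta := fun th => mkposreal (dv th) (proj1 (dv_spec th))).
 destruct (compactness_value_1d (1/2) (s+1) delta) as [d Hd].
 set (d' := Rmin d (1/4)).
 assert (Hd'0 : 0 < d') by (unfold d'; apply Rmin_pos; [apply cond_pos|lra]).
 assert (Hd'1 : d' <= d) by apply Rmin_l. assert (Hd'2 : d' <= 1/4) by apply Rmin_r.
 assert (U : forall th, 1/2 <= th <= s+1 -> forall y1 y2, 0 < y1 -> 0 < y2 -> Rabs (y1 - 1) < d' -> Rabs (y2 - s) < d' -> h + d' < Phi th y1 y2).
 { intros th Hth y1 y2 Hy1 Hy2 A1 A2. apply NNPP; intro Hc. apply (Hd th Hth). intros [t [Ht [Htt Hdt]]].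
   apply Hc. simpl in Htt, Hdt. destruct (dv_spec t) as [_ [_ P]].
   specialize (P Ht th y1 y2 ltac:(lra) Hy1 Hy2 Htt ltac:(lra) ltac:(lra)). lra. }
 assert (U2 : forall th y1 y2, 0 < th -> Rabs (y1 - 1) < d' -> Rabs (y2 - s) < d' -> h + d' < Phi th y1 y2).
 { intros th y1 y2 Hth A1 A2. pose proof (Rabs_def2 _ _ A1). pose proof (Rabs_def2 _ _ A2).
   destruct (Rlt_dec th (1/2)) as [B1|B1].
   - specialize (U (1/2) ltac:(lra) y1 y2 ltac:(lra) ltac:(lra) A1 A2). unfold Phi in *; cbv beta in *.
     pose proof (PfL th (1/2) y1 ltac:(lra) ltac:(lra) ltac:(lra)). pose proof (PfL th (1/2) y2 ltac:(lra) ltac:(lra) ltac:(lra)). lra.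
   - destruct (Rlt_dec (s+1) th) as [B2|B2].
     + specialize (U (s+1) ltac:(lra) y1 y2 ltac:(lra) ltac:(lra) A1 A2). unfold Phi in *; cbv beta in *.
       pose proof (PfR th (s+1) y1 ltac:(lra) ltac:(lra) ltac:(lra)). pose proof (PfR th (s+1) y2 ltac:(lra) ltac:(lra) ltac:(lra)). lra.
     + apply U; lra. }
 set (g := fun y1 y2 => if Rlt_dec (Rabs (y1 - 1)) d' then (if Rlt_dec (Rabs (y2 - s)) d' then Fin (h + d') else Fin (2*L)) else Fin (2*L)).
 assert (Glsc : lsc2_on g).
 { intros x1 x2 c Hx1 Hx2 Hc. unfold g in Hc.
   destruct (Rlt_dec (Rabs (x1 - 1)) d') as [B1|B1]; [destruct (Rlt_dec (Rabs (x2 - s)) d') as [B2|B2]|].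
   - exists (Rmin (d' - Rabs (x1 - 1)) (d' - Rabs (x2 - s))). split. apply Rmin_pos; lra.
     intros y1 y2 _ _ C1 C2. unfold g.
     assert (C1' : Rabs (y1 - x1) < d' - Rabs (x1 - 1)) by (eapply Rlt_le_trans; [exact C1|apply Rmin_l]).
     assert (C2' : Rabs (y2 - x2) < d' - Rabs (x2 - s)) by (eapply Rlt_le_trans; [exact C2|apply Rmin_r]).
     assert (Rabs (y1 - 1) < d'). { replace (y1 - 1) with ((y1 - x1) + (x1 - 1)) by ring.
       eapply Rle_lt_trans. apply Rabs_triang. lra. }
     assert (Rabs (y2 - s) < d'). { replace (y2 - s) with ((y2 - x2) + (x2 - s)) by ring.
       eapply Rle_lt_trans. apply Rabs_triang. lra. }
     destruct (Rlt_dec (Rabs (y1 - 1)) d'); [|contradiction].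
     destruct (Rlt_dec (Rabs (y2 - s)) d'); [|contradiction]. exact Hc.
   - simpl in Hc. exists 1. split; [lra|]. intros y1 y2 _ _ _ _. unfold g.
     destruct (Rlt_dec (Rabs (y1 - 1)) d'); [destruct (Rlt_dec (Rabs (y2 - s)) d')|]; simpl; lra.
   - simpl in Hc. exists 1. split; [lra|]. intros y1 y2 _ _ _ _. unfold g.
     destruct (Rlt_dec (Rabs (y1 - 1)) d'); [destruct (Rlt_dec (Rabs (y2 - s)) d')|]; simpl; lra. }
 assert (Gmin : forall y1 y2, 0 <= y1 -> 0 <= y2 -> er_le (g y1 y2) (tildeH F y1 y2)).
 { intros y1 y2 Hy1 Hy2. unfold tildeH.
   set (S := fun v => exists th, 0 < th /\ v = er_plus (persp F th y1) (persp F th y2)).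
   assert (HS : exists v, S v) by (exists (er_plus (persp F 1 y1) (persp F 1 y2)); exists 1; split; [lra|auto]).
   assert (HSL : forall v, S v -> er_le (Fin (2*L)) v).
   { intros v [th [Hth ->]]. apply er_plus_lb; apply Hlow; auto. }
   destruct (er_inf_spec S (2*L) HS HSL) as [G1 G2].
   unfold g. destruct (Rlt_dec (Rabs (y1 - 1)) d') as [B1|B1]; [destruct (Rlt_dec (Rabs (y2 - s)) d') as [B2|B2]|];
     try (apply G2; exact HSL).
   apply G2. intros v [th [Hth ->]].
   pose proof (Rabs_def2 _ _ B1). pose proof (Rabs_def2 _ _ B2).
   assert (PP : forall y, 0 < y -> persp F th y = Fin (Pf f th y)).
   { intros y Hy. unfold persp. destruct (Rlt_dec 0 y); [|lra]. rewrite HFin.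
     reflexivity. left; apply Rdiv_lt_0_compat; lra. }
   rewrite !PP by lra. simpl. specialize (U2 th y1 y2 Hth B1 B2). unfold Phi in U2; cbv beta in U2. lra. }
 assert (Hsup : er_le (g 1 s) (HF F 1 s)).
 { unfold HF, lsc_env.
   set (S := fun v => exists g0 : R -> R -> ER, lsc2_on g0 /\
          (forall y1 y2, 0 <= y1 -> 0 <= y2 -> er_le (g0 y1 y2) (tildeH F y1 y2)) /\ v = g0 1 s).
   assert (Hg : S (g 1 s)) by (exists g; auto).
   destruct (er_sup_spec S (ex_intro _ _ Hg)) as [G1 _]. apply G1; auto. }
 rewrite HHF in Hsup. unfold g in Hsup.
 destruct (Rlt_dec (Rabs (1 - 1)) d') as [B1|B1]; [destruct (Rlt_dec (Rabs (s - s)) d') as [B2|B2]|].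
 - simpl in Hsup. lra.
 - apply B2. replace (s - s) with 0 by ring. rewrite Rabs_R0; lra.
 - apply B1. replace (1 - 1) with 0 by ring. rewrite Rabs_R0; lra.
Qed.

From Coquelicot Require Import Coquelicot.

Theorem mainTheorem7 (F : R -> ER) (a : R) :
  Gamma0s F -> 0 < a < 1 ->
  is_metric_Rplus (fun x y => er_pow (persp F x y) a) ->
  (forall s, 0 <= s -> Ta a F s = F s) ->
  exists c, 0 < c /\
    forall s, 0 <= s -> F s = Fin (c * rpow (Rabs (rpow s a - 1)) (/ a)).
Proof.
 intros [[Hnn [Hconv [Hlsc HF1]]] Hsym] Ha [Hfin [Hzero [Hsymm Htri]]] Hfix.
 assert (P1 : forall x, persp F x 1 = er_scale 1 (F x)).
 { intro x. unfold persp. destruct (Rlt_dec 0 1); [|lra]. replace (x/1) with x by field. auto. }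
 set (f := fun x => match F x with Fin v => v | PInf => 0 end).
 assert (HFin : forall x, 0 <= x -> F x = Fin (f x)).
 { intros x Hx. destruct (Hfin x 1 Hx ltac:(lra)) as [d Hd]. rewrite P1 in Hd. unfold f.
   destruct (F x); simpl in Hd; [reflexivity|discriminate]. }
 assert (Hfnn : forall x, 0 <= x -> 0 <= f x).
 { intros x Hx. pose proof (Hnn x Hx). rewrite HFin in H by auto. exact H. }
 assert (Hf1 : f 1 = 0). { unfold f. rewrite HF1. auto. }
 assert (Hfsym : forall s, 0 < s -> f s = s * f (/ s)).
 { intros s Hs. pose proof (Hsym s ltac:(lra)). unfold revF in H. destruct (Rlt_dec 0 s); [|lra].
   rewrite HFin in H by lra. rewrite HFin in H by (left; apply Rinv_0_lt_compat; lra). simpl in H. congruence. }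
 assert (Hflsc : forall x c, 0 <= x -> c < f x -> exists d, 0 < d /\ forall y, 0 <= y -> Rabs (y - x) < d -> c < f y).
 { intros x c Hx Hc. destruct (Hlsc x c Hx) as [d [Hd Hd']]. rewrite HFin by auto; simpl; auto.
   exists d. split; auto. intros y Hy Hyx. specialize (Hd' y Hy Hyx). rewrite HFin in Hd' by auto. exact Hd'. }
 assert (Hcv : forall x y l, 0 <= x -> 0 <= y -> 0 < l < 1 -> f (l*x + (1-l)*y) <= l * f x + (1-l) * f y).
 { intros x y l Hx Hy Hl. pose proof (Hconv x y l Hx Hy Hl). rewrite !HFin in H by nra. simpl in H. exact H. }
 assert (Hm1 : forall x y, 1 <= x -> x <= y -> f x <= f y).
 { intros x y Hx Hxy. destruct (Req_dec x 1) as [->|Hx1]. rewrite Hf1; apply Hfnn; lra.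
   destruct (Req_dec x y) as [->|Hxy']. lra.
   set (l := (y - x)/(y - 1)).
   assert (Hl : 0 < l < 1). { unfold l. split. apply Rdiv_lt_0_compat; lra.
     apply Rmult_lt_reg_r with (y-1); [lra|]. unfold Rdiv. rewrite Rmult_assoc, Rinv_l by nz. lra. }
   pose proof (Hcv 1 y l ltac:(lra) ltac:(lra) Hl).
   replace (l*1 + (1-l)*y) with x in H by (unfold l; field; nz). rewrite Hf1 in H.
   pose proof (Hfnn y ltac:(lra)). nra. }
 assert (Hm0 : forall x y, 0 <= x -> x <= y -> y <= 1 -> f y <= f x).
 { intros x y Hx Hxy Hy1. destruct (Req_dec y 1) as [->|Hy1']. rewrite Hf1; apply Hfnn; lra.
   destruct (Req_dec x y) as [->|Hxy']. lra.
   set (l := (y - x)/(1 - x)).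
   assert (Hl : 0 < l < 1). { unfold l. split. apply Rdiv_lt_0_compat; lra.
     apply Rmult_lt_reg_r with (1-x); [lra|]. unfold Rdiv. rewrite Rmult_assoc, Rinv_l by nz. lra. }
   pose proof (Hcv 1 x l ltac:(lra) ltac:(lra) Hl).
   replace (l*1 + (1-l)*x) with y in H by (unfold l; field; nz). rewrite Hf1 in H.
   pose proof (Hfnn x ltac:(lra)). nra. }
 assert (PP : forall x y, 0 <= x -> 0 < y -> persp F x y = Fin (Pf f x y)).
 { intros x y Hx Hy. unfold persp. destruct (Rlt_dec 0 y); [|lra]. rewrite HFin.
   reflexivity. apply Rmult_le_pos; [lra|left; apply Rinv_0_lt_compat; lra]. }
 assert (D0 : forall y, 0 < y -> er_pow (persp F 0 y) a = Fin (rpow (y * f 0) a)).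
 { intros y Hy. rewrite PP by lra. unfold Pf. replace (0/y) with 0 by (field; nz). reflexivity. }
 assert (Dxy : forall x y, 0 <= x -> 0 < y -> er_pow (persp F x y) a = Fin (rd f a x y)).
 { intros x y Hx Hy. rewrite PP by lra. reflexivity. }
 assert (Hf0 : 0 < f 0).
 { destruct (Req_dec (f 0) 0) as [E|E]. 2: pose proof (Hfnn 0 ltac:(lra)); lra.
   exfalso. assert (0 = 1). { apply (Hzero 0 1); try lra. rewrite D0 by lra. rewrite E, Rmult_0_r, rpow_0. auto. } lra. }
 assert (Rec : forall th, 0 < th -> exists q, persp F th 0 = Fin q /\ (0 <= q \/ th * f 0 = 1)).
 { intros th Hth. destruct (Hfin th 0 ltac:(lra) ltac:(lra)) as [d Hd].
   destruct (persp F th 0) as [q|] eqn:Eq; [|simpl in Hd; discriminate].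
   exists q. split; auto. destruct (Rle_dec 0 q) as [Hq|Hq]; [left; auto|right].
   pose proof (Hsymm th 0 ltac:(lra) ltac:(lra)). cbv beta in H. rewrite Eq, D0 in H by lra.
   simpl in H. injection H as H. rewrite rpow_neg in H by lra.
   rewrite <- (rpow_1 a) in H. apply rpow_inj in H; try lra. nra. }
 destruct (Rec (/ f 0) ltac:(apply Rinv_0_lt_compat; lra)) as [q0 [Hq0 _]].
 set (L := Rmin 0 q0).
 assert (HL : L <= 0) by apply Rmin_l.
 assert (Hlow : forall th r, 0 < th -> 0 <= r -> er_le (Fin L) (persp F th r)).
 { intros th r Hth Hr. destruct (Req_dec r 0) as [->|Hr0].
   - destruct (Rec th Hth) as [q [Hq [Hq1|Hq1]]]; rewrite Hq; simpl.
     + lra.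
     + assert (th = / f 0) by (field_simplify_eq; [|nz]; lra). subst th. rewrite Hq0 in Hq. injection Hq as <-. apply Rmin_r.
   - rewrite PP by lra. simpl. pose proof (Pf_nn_gen := Hfnn). unfold Pf.
     assert (0 <= r * f (th / r)). { apply Rmult_le_pos; [lra|]. apply Hfnn. apply Rmult_le_pos; [lra|left; apply Rinv_0_lt_compat; lra]. }
     lra. }
 assert (HRH : RH f a).
 { constructor; auto.
   - intros x y z Hx Hy Hz. pose proof (Htri x y z ltac:(lra) ltac:(lra) ltac:(lra)). cbv beta in H.
     rewrite !Dxy in H by lra. simpl in H. exact H.
   - intros x y Hx Hy. pose proof (Htri x 0 y ltac:(lra) ltac:(lra) ltac:(lra)). cbv beta in H.
     rewrite (Hsymm x 0) in H by lra. rewrite Dxy, !D0 in H by lra. simpl in H. exact H.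
   - intros x y Hx Hy. pose proof (Htri 0 x y ltac:(lra) ltac:(lra) ltac:(lra)). cbv beta in H.
     rewrite !D0, Dxy in H by lra. simpl in H. exact H.
   - intros s Hs. pose proof (Hfix s ltac:(lra)). unfold Ta in H. rewrite HFin in H by lra.
     assert (HP : 0 < Rpower 2 (/a - 1)) by (unfold Rpower; apply exp_pos).
     destruct (HF F 1 s) as [v|] eqn:EH; simpl in H; [|discriminate]. injection H as H.
     assert (v = f s / Rpower 2 (/a - 1)) by (rewrite <- H; field; nz).
     rewrite <- H0. apply (MP_ER F f s v L); auto.
     rewrite H0. apply Rmult_le_pos. apply Hfnn; lra. left; apply Rinv_0_lt_compat; lra. }
 exists (f 0). split; auto. intros s Hs. rewrite HFin by auto. f_equal. apply (f_formula f a HRH s Hs).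
Qed.
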